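(* Let $\mathbf L=(L,\vee,\wedge)$ be a partial lattice and $E\in\operatorname{Con}\mathbf L$. Then $\mathbf L/E:=(L/E,\vee,\wedge)$ is a partial lattice.
   Context: A partial lattice is a set $L$ with two partial binary operations $\vee,\wedge$ satisfying the strong identities $x\vee x\stackrel{s}{\approx}x$, $x\wedge x\stackrel{s}{\approx}x$, $x\vee y\stackrel{s}{\approx}y\vee x$, $x\wedge y\stackrel{s}{\approx}y\wedge x$, $(x\vee y)\vee z\stackrel{s}{\approx}x\vee(y\vee z)$, $(x\wedge y)\wedge z\stackrel{s}{\approx}x\wedge(y\wedge z)$ (for every assignment, one side is defined iff the other is, and then they are equal) and the duality conditions: if $a\vee b$ is defined and equals $a$ then $a\wedge b$ is defined and equals $b$; if $a\wedge b$ is defined and equals $a$ then $a\vee b$ is defined and equals $b$. Its induced order is $x\leq y$ iff $x\vee y$ is defined and equals $y$. The two-point extension $\mathbf L^*=(L^*,\leq^* )$, with new elements $0,1\notin L$: $L^*$ is $L$ together with a new top element $1$ if $\vee$ is not everywhere defined and a new bottom element $0$ if $\wedge$ is not everywhere defined; $\leq^*$ extends $\leq$ by putting $0$ below and $1$ above all elements; it is a lattice with operations $\vee^*=\sup_{\leq^*}$, $\wedge^*=\inf_{\leq^*}$. A congruence on $\mathbf L$ is an equivalence relation $E$ on $L$ with $\Theta(E)\cap L^2=E$, where $\Theta(E)$ is the lattice congruence on $\mathbf L^*$ generated by $E$; $\operatorname{Con}\mathbf L$ is the set of these. For $E\in\operatorname{Con}\mathbf L$ the partial operations on $L/E$ are: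 $[x]E\vee[y]E:=[x\vee^*y]\Theta(E)\cap L$ if this set is non-empty, undefined otherwise; $[x]E\wedge[y]E:=[x\wedge^*y]\Theta(E)\cap L$ if this set is non-empty, undefined otherwise (these are well defined). *)

(* Defs.v *)
From Stdlib Require Import ClassicalEpsilon.

Set Implicit Arguments.

Definition obind {A B : Type} (f : A -> option B) (o : option A) : option B :=
  match o with Some a => f a | None => None end.

Definition pset (T : Type) := T -> Prop.

Definition partial_lattice_on (T : Type) (P : pset T)
  (j m : T -> T -> option T) : Prop :=
  (forall x y z, P x -> P y -> j x y = Some z -> P z) /\
  (forall x y z, P x -> P y -> m x y = Some z -> P z) /\
  (forall x, P x -> j x x = Some x) /\
  (forall x, P x -> m x x = Some x) /\
  (forall x y, P x -> P y -> j x y = j y x) /\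
  (forall x y, P x -> P y -> m x y = m y x) /\
  (* associativity: one side defined iff the other is, and then equal *)
  (forall x y z, P x -> P y -> P z ->
     obind (fun u => j u z) (j x y) = obind (fun v => j x v) (j y z)) /\
  (forall x y z, P x -> P y -> P z ->
     obind (fun u => m u z) (m x y) = obind (fun v => m x v) (m y z)) /\
  (forall a b, P a -> P b -> j a b = Some a -> m a b = Some b) /\
  (forall a b, P a -> P b -> m a b = Some a -> j a b = Some b).

Definition partial_lattice (L : Type) (j m : L -> L -> option L) : Prop :=
  partial_lattice_on (fun _ : L => True) j m.

Section Ext.
Context {L : Type} (j m : L -> L -> option L).

Definition ple (x y : L) : Prop := j x y = Some y.

Definition join_total : Prop := forall x y, exists z, j x y = Some z.
Definition meet_total : Prop := forall x y, exists z, m x y = Some z.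

(* the two-point extension L^*: new bottom 0 and new top 1 *)
Inductive ext : Type := Bot | Elt (x : L) | Top.

Definition inLs (e : ext) : Prop :=
  match e with
  | Bot => ~ meet_total
  | Elt _ => True
  | Top => ~ join_total
  end.

Definition leS (a b : ext) : Prop :=
  match a, b with
  | Bot, _ => True
  | _, Top => True
  | Elt x, Elt y => ple x y
  | _, _ => False
  end.

Definition is_sup (a b s : ext) : Prop :=
  inLs s /\ leS a s /\ leS b s /\
  forall t, inLs t -> leS a t -> leS b t -> leS s t.

Definition is_inf (a b s : ext) : Prop :=
  inLs s /\ leS s a /\ leS s b /\
  forall t, inLs t -> leS t a -> leS t b -> leS t s.

Definition lat_cong (th : ext -> ext -> Prop) : Prop :=
  (forall a b, th a b -> inLs a /\ inLs b) /\
  (forall a, inLs a -> th a a) /\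
  (forall a b, th a b -> th b a) /\
  (forall a b c, th a b -> th b c -> th a c) /\
  (forall a b c d s t, th a b -> th c d -> is_sup a c s -> is_sup b d t -> th s t) /\
  (forall a b c d s t, th a b -> th c d -> is_inf a c s -> is_inf b d t -> th s t).

Definition Theta (E : L -> L -> Prop) (a b : ext) : Prop :=
  forall th, lat_cong th -> (forall x y, E x y -> th (Elt x) (Elt y)) -> th a b.

Definition equivalence_rel (E : L -> L -> Prop) : Prop :=
  (forall x, E x x) /\ (forall x y, E x y -> E y x) /\
  (forall x y z, E x y -> E y z -> E x z).

Definition is_con (E : L -> L -> Prop) : Prop :=
  equivalence_rel E /\ forall x y, Theta E (Elt x) (Elt y) <-> E x y.

(* L/E: its elements are the E-classes [x]E = E x, viewed as subsets of L *)
Definition qcar (E : L -> L -> Prop) : pset (pset L) :=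
  fun A => exists x, A = E x.

(* [x]E v [y]E = C  iff  C = [x v^* y]Theta(E) ∩ L and C is non-empty *)
Definition qjoin_rel (E : L -> L -> Prop) (A B C : pset L) : Prop :=
  exists x y s, A = E x /\ B = E y /\ is_sup (Elt x) (Elt y) s /\
    C = (fun z => Theta E s (Elt z)) /\ exists z, C z.

Definition qmeet_rel (E : L -> L -> Prop) (A B C : pset L) : Prop :=
  exists x y s, A = E x /\ B = E y /\ is_inf (Elt x) (Elt y) s /\
    C = (fun z => Theta E s (Elt z)) /\ exists z, C z.

Definition qop (R : pset L -> pset L -> pset L -> Prop) (A B : pset L)
  : option (pset L) :=
  epsilon (inhabits None)
    (fun o => match o with
              | Some C => R A B C
              | None => forall C, ~ R A B C
              end).

Definition qjoin (E : L -> L -> Prop) := qop (qjoin_rel E).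
Definition qmeet (E : L -> L -> Prop) := qop (qmeet_rel E).

End Ext.

(* Main.v *)
Require Import Defs.
From Stdlib Require Import ClassicalEpsilon FunctionalExtensionality PropExtensionality.

Section Op.
Variable L : Type.
Variable op : L -> L -> option L.
Hypothesis idem : forall x, op x x = Some x.
Hypothesis comm : forall x y, op x y = op y x.
Hypothesis assoc : forall x y z,
  obind (fun u => op u z) (op x y) = obind (fun v => op x v) (op y z).

Definition R x y := op x y = Some y.

Lemma R_refl x : R x x. Proof. apply idem. Qed.
Lemma R_anti x y : R x y -> R y x -> x = y.
Proof. unfold R; intros H1 H2. rewrite comm, H2 in H1. congruence. Qed.
Lemma R_trans x y z : R x y -> R y z -> R x z.
Proof. unfold R; intros H1 H2. pose proof (assoc x y z) as A.
  rewrite H1, H2 in A; simpl in A. congruence. Qed.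
Lemma op_some x y z : op x y = Some z ->
  R x z /\ R y z /\ forall t, R x t -> R y t -> R z t.
Proof. unfold R; intros H. split; [|split].
  - pose proof (assoc x x y) as A. rewrite idem, H in A; simpl in A. congruence.
  - pose proof (assoc y y x) as A. rewrite idem, comm, H in A; simpl in A. congruence.
  - intros t H1 H2. pose proof (assoc x y t) as A. rewrite H, H2 in A; simpl in A. congruence.
Qed.
Lemma op_none x y : op x y = None -> forall t, R x t -> R y t -> False.
Proof. unfold R; intros H t H1 H2. pose proof (assoc x y t) as A.
  rewrite H, H2 in A; simpl in A. congruence. Qed.
End Op.

Section A.
Variable L : Type.
Variables j m : L -> L -> option L.
Hypothesis PL : partial_lattice j m.

Lemma jidem x : j x x = Some x. Proof. destruct PL as (c1&c2&i1&i2&k1&k2&a1&a2&d1&d2); auto. Qed.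
Lemma jcomm x y : j x y = j y x. Proof. destruct PL as (c1&c2&i1&i2&k1&k2&a1&a2&d1&d2); auto. Qed.
Lemma jassoc x y z : obind (fun u => j u z) (j x y) = obind (fun v => j x v) (j y z).
Proof. destruct PL as (c1&c2&i1&i2&k1&k2&a1&a2&d1&d2); auto. Qed.
Lemma mcomm x y : m x y = m y x. Proof. destruct PL as (c1&c2&i1&i2&k1&k2&a1&a2&d1&d2); auto. Qed.
Lemma dual1 a b : j a b = Some a -> m a b = Some b. Proof. destruct PL as (c1&c2&i1&i2&k1&k2&a1&a2&d1&d2); auto. Qed.
Lemma dual2 a b : m a b = Some a -> j a b = Some b. Proof. destruct PL as (c1&c2&i1&i2&k1&k2&a1&a2&d1&d2); auto. Qed.

Lemma PL_swap : partial_lattice m j.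
Proof.
  destruct PL as (c1&c2&i1&i2&k1&k2&a1&a2&d1&d2).
  repeat split; auto.
Qed.

Lemma ple_m x y : ple j x y <-> m y x = Some x.
Proof. unfold ple; split; intro H.
  - apply dual1. rewrite jcomm; auto.
  - rewrite mcomm in H. apply dual2 in H. auto.
Qed.

Lemma leS_refl a : leS j a a.
Proof. destruct a; simpl; auto. apply jidem. Qed.
Lemma leS_trans a b c : leS j a b -> leS j b c -> leS j a c.
Proof. destruct a, b, c; simpl; auto; try tauto.
  apply (R_trans L j jassoc). Qed.
Lemma leS_anti a b : leS j a b -> leS j b a -> a = b.
Proof. destruct a, b; simpl; try tauto.
  intros; f_equal; eapply (R_anti L j jcomm); eauto. Qed.

Lemma sup_elt x y z : j x y = Some z -> is_sup j m (Elt x) (Elt y) (Elt z).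
Proof. intro H. destruct (op_some L j jidem jcomm jassoc x y z H) as (H1&H2&H3).
  split; [simpl; auto|]. split; [exact H1|]. split; [exact H2|].
  intros [|w|] _; simpl; auto. apply H3. Qed.
Lemma sup_top x y : j x y = None -> is_sup j m (Elt x) (Elt y) Top.
Proof. intro H. split; [simpl; intro T; destruct (T x y); congruence|].
  split; [simpl; auto|]. split; [simpl; auto|].
  intros [|w|] _; simpl; auto. intros H1 H2. exact (op_none L j jassoc x y H w H1 H2). Qed.

Lemma sup_ex a b : inLs j m a -> inLs j m b -> exists s, is_sup j m a b s.
Proof. intros Ha Hb. destruct a as [|x|], b as [|y|].
  all: try (exists Bot; repeat split; simpl; auto; fail).
  all: try (exists Top; repeat split; simpl; auto; intros [] ; simpl; tauto).
  - exists (Elt y); repeat split; simpl; auto; try apply jidem; intros [] ; simpl; tauto.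
  - exists (Elt x); repeat split; simpl; auto; try apply jidem; intros [] ; simpl; tauto.
  - destruct (j x y) as [z|] eqn:E.
    + exists (Elt z); apply sup_elt; auto.
    + exists Top; apply sup_top; auto.
Qed.

Lemma sup_sym a b s : is_sup j m a b s -> is_sup j m b a s.
Proof. intros (H1&H2&H3&H4); repeat split; auto. Qed.
Lemma sup_uniq a b s t : is_sup j m a b s -> is_sup j m a b t -> s = t.
Proof. intros (H1&H2&H3&H4) (G1&G2&G3&G4). apply leS_anti; auto. Qed.

Lemma sup3 x y z s1 t : is_sup j m x y s1 -> is_sup j m s1 z t ->
  inLs j m t /\ leS j x t /\ leS j y t /\ leS j z t /\
  forall u, inLs j m u -> leS j x u -> leS j y u -> leS j z u -> leS j t u.
Proof. intros (H1&H2&H3&H4) (G1&G2&G3&G4).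
  split; [auto|]. split; [eapply leS_trans; eauto|]. split; [eapply leS_trans; eauto|].
  split; [auto|]. intros u Hu Hx Hy Hz. apply G4; auto. Qed.

Lemma sup_assoc x y z s1 t s2 t' : is_sup j m x y s1 -> is_sup j m s1 z t ->
  is_sup j m z y s2 -> is_sup j m s2 x t' -> t = t'.
Proof. intros A B C D. destruct (sup3 _ _ _ _ _ A B) as (a1&a2&a3&a4&a5).
  destruct (sup3 _ _ _ _ _ C D) as (b1&b2&b3&b4&b5).
  apply leS_anti; auto. Qed.

Definition fl (e : @ext L) : @ext L := match e with Bot => Top | Elt x => Elt x | Top => Bot end.
Lemma flK e : fl (fl e) = e. Proof. destruct e; reflexivity. Qed.

Lemma leS_fl a b : leS m a b <-> leS j (fl b) (fl a).
Proof. destruct a, b; simpl; try tauto. rewrite ple_m. unfold ple. rewrite mcomm. tauto. Qed.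

Lemma sup_inf_fl a c s : is_sup m j a c s <-> is_inf j m (fl a) (fl c) (fl s).
Proof. unfold is_sup, is_inf. rewrite !leS_fl.
  assert (HI : forall e, inLs m j e <-> inLs j m (fl e)) by (intros []; simpl; tauto).
  rewrite HI. split; intros (H1&H2&H3&H4); repeat split; auto.
  - intros t Ht G1 G2. rewrite <- (flK t). rewrite <- leS_fl. apply H4.
    + rewrite HI, flK; auto.
    + rewrite leS_fl, flK; auto.
    + rewrite leS_fl, flK; auto.
  - intros t Ht G1 G2. rewrite leS_fl. apply H4; auto. apply HI; auto.
    all: rewrite <- leS_fl; auto.
Qed.
End A.

Section B.
Variable L : Type.
Variables j m : L -> L -> option L.
Hypothesis PL : partial_lattice j m.

Lemma inLs_fl (e : @ext L) : inLs m j e <-> inLs j m (fl L e).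
Proof. destruct e; simpl; tauto. Qed.

Lemma lat_cong_fl th : lat_cong j m th -> lat_cong m j (fun a b => th (fl L a) (fl L b)).
Proof.
  intros (c1&c2&c3&c4&c5&c6). split; [|split; [|split; [|split; [|split]]]].
  - intros a b H. destruct (c1 _ _ H). rewrite !inLs_fl. auto.
  - intros a H. apply c2. apply inLs_fl; auto.
  - intros a b H; auto.
  - intros a b c H1 H2; eauto.
  - intros a b c d s t H1 H2 H3 H4. apply (c6 (fl L a) (fl L b) (fl L c) (fl L d)); auto.
    + apply (proj1 (sup_inf_fl L j m PL _ _ _) H3).
    + apply (proj1 (sup_inf_fl L j m PL _ _ _) H4).
  - intros a b c d s t H1 H2 H3 H4. apply (c5 (fl L a) (fl L b) (fl L c) (fl L d)); auto.
    + rewrite <- (flK L a), <- (flK L c), <- (flK L s) in H3.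
      apply (proj2 (sup_inf_fl L m j (PL_swap L j m PL) _ _ _) H3).
    + rewrite <- (flK L b), <- (flK L d), <- (flK L t) in H4.
      apply (proj2 (sup_inf_fl L m j (PL_swap L j m PL) _ _ _) H4).
Qed.
End B.

Lemma theta_fl L (j m : L -> L -> option L) (PL : partial_lattice j m) E a b :
  Theta m j E (fl L a) (fl L b) <-> Theta j m E a b.
Proof. split.
  - intros H th Hth HE. rewrite <- (flK L a), <- (flK L b).
    apply (H (fun a b => th (fl L a) (fl L b))).
    + apply lat_cong_fl; auto.
    + intros x y; simpl; auto.
  - intros H th Hth HE.
    apply (H (fun a b => th (fl L a) (fl L b))).
    + apply lat_cong_fl; auto. apply PL_swap; auto.
    + intros x y; simpl; auto.
Qed.

Lemma qop_spec {X : Type} (R : pset X -> pset X -> pset X -> Prop) A B :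
  (exists C, R A B C /\ qop R A B = Some C) \/ ((forall C, ~ R A B C) /\ qop R A B = None).
Proof.
  unfold qop.
  pose proof (epsilon_spec (inhabits None)
    (fun o => match o with Some C => R A B C | None => forall C, ~ R A B C end)) as H.
  destruct (epsilon _ _) as [C|]; [left|right].
  - exists C; split; auto. apply H.
    destruct (classic (exists C, R A B C)) as [[C' HC]|N].
    + exists (Some C'); auto.
    + exists None. intros C' HC. apply N; eauto.
  - split; auto. apply H.
    destruct (classic (exists C, R A B C)) as [[C' HC]|N].
    + exists (Some C'); auto.
    + exists None. intros C' HC. apply N; eauto.
Qed.

Lemma qop_some {X : Type} (R : pset X -> pset X -> pset X -> Prop) A B C :
  (forall C1 C2, R A B C1 -> R A B C2 -> C1 = C2) -> R A B C -> qop R A B = Some C.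
Proof. intros F H. destruct (qop_spec R A B) as [(C'&H1&H2)|(H1&H2)].
  - rewrite H2; f_equal; auto.
  - exfalso; eapply H1; eauto. Qed.

Lemma qop_none {X : Type} (R : pset X -> pset X -> pset X -> Prop) A B :
  (forall C, ~ R A B C) -> qop R A B = None.
Proof. intros N. destruct (qop_spec R A B) as [(C'&H1&H2)|(H1&H2)]; auto.
  exfalso; eapply N; eauto. Qed.

Lemma qop_some_inv {X : Type} (R : pset X -> pset X -> pset X -> Prop) A B C :
  qop R A B = Some C -> R A B C.
Proof. intros H. destruct (qop_spec R A B) as [(C'&H1&H2)|(H1&H2)]; congruence. Qed.

Section C.
Variable L : Type.
Variables j m : L -> L -> option L.
Hypothesis PL : partial_lattice j m.
Variable E : L -> L -> Prop.
Hypothesis Con : is_con j m E.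

Notation Th := (Theta j m E).

Lemma theta_cong : lat_cong j m Th.
Proof.
  assert (B : forall a b, Th a b -> inLs j m a /\ inLs j m b).
  { intros a b H. apply (H (fun a b => inLs j m a /\ inLs j m b)).
    - repeat split; try tauto; intros; try tauto;
        repeat match goal with H : is_sup _ _ _ _ _ |- _ => destruct H as [? _]
                             | H : is_inf _ _ _ _ _ |- _ => destruct H as [? _] end; tauto.
    - simpl; auto. }
  split; [exact B|]. split; [|split; [|split; [|split]]].
  - intros a Ha th Hth HE. destruct Hth as (_&c2&_). auto.
  - intros a b H th Hth HE. pose proof (H th Hth HE). destruct Hth as (_&_&c3&_). auto.
  - intros a b c H1 H2 th Hth HE. pose proof (H1 th Hth HE); pose proof (H2 th Hth HE). destruct Hth as (_&_&_&c4&_). eauto.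
  - intros a b c d s t H1 H2 H3 H4 th Hth HE. pose proof (H1 th Hth HE); pose proof (H2 th Hth HE). destruct Hth as (_&_&_&_&c5&_). eauto.
  - intros a b c d s t H1 H2 H3 H4 th Hth HE. pose proof (H1 th Hth HE); pose proof (H2 th Hth HE). destruct Hth as (_&_&_&_&_&c6). eauto.
Qed.

Lemma th_refl a : inLs j m a -> Th a a. Proof. apply theta_cong. Qed.
Lemma th_sym a b : Th a b -> Th b a. Proof. apply theta_cong. Qed.
Lemma th_trans a b c : Th a b -> Th b c -> Th a c. Proof. apply theta_cong. Qed.
Lemma th_sup a b c d s t : Th a b -> Th c d -> is_sup j m a c s -> is_sup j m b d t -> Th s t.
Proof. apply theta_cong. Qed.
Lemma th_inf a b c d s t : Th a b -> Th c d -> is_inf j m a c s -> is_inf j m b d t -> Th s t.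
Proof. apply theta_cong. Qed.
Lemma th_E x y : Th (Elt x) (Elt y) <-> E x y. Proof. apply Con. Qed.
Lemma E_refl x : E x x. Proof. destruct Con as ((r&_&_)&_); auto. Qed.
Lemma E_eq x y : E x = E y -> E x y. Proof. intro H. rewrite H. apply E_refl. Qed.

Definition cls (s : @ext L) : L -> Prop := fun z => Th s (Elt z).

Lemma cls_eq s t : Th s t -> cls s = cls t.
Proof. intro H. unfold cls. apply functional_extensionality; intro z.
  apply propositional_extensionality; split; intro G.
  - eapply th_trans; [apply th_sym|]; eauto.
  - eapply th_trans; eauto. Qed.

Lemma cls_E s w : Th s (Elt w) -> cls s = E w.
Proof. intro H. rewrite (cls_eq _ _ H). unfold cls. apply functional_extensionality; intro z.
  apply propositional_extensionality; apply th_E. Qed.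

Lemma qj_fun A B C1 C2 : qjoin_rel j m E A B C1 -> qjoin_rel j m E A B C2 -> C1 = C2.
Proof. intros (x&y&s&H1&H2&H3&H4&_) (x'&y'&s'&G1&G2&G3&G4&_). subst.
  apply cls_eq. eapply th_sup; [| |exact H3|exact G3]; apply th_E; apply E_eq; congruence.
Qed.

Lemma qj_char x y s : is_sup j m (Elt x) (Elt y) s ->
  ((exists w, cls s w) -> qjoin j m E (E x) (E y) = Some (cls s)) /\
  (~ (exists w, cls s w) -> qjoin j m E (E x) (E y) = None).
Proof. intro H. split; intro N.
  - apply qop_some; [apply qj_fun|]. exists x, y, s. split; [reflexivity|]. split; [reflexivity|]. split; [auto|]. split; [reflexivity|auto].
  - apply qop_none. intros C (x'&y'&s'&G1&G2&G3&G4&G5). subst. apply N.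
    replace (cls s) with (cls s'); auto.
    apply cls_eq. eapply th_sup; [| |exact G3|exact H]; apply th_E; apply E_eq; congruence.
Qed.

Lemma qj_comm A B : qjoin j m E A B = qjoin j m E B A.
Proof. assert (S : forall A B C, qjoin_rel j m E A B C -> qjoin_rel j m E B A C).
  { intros A' B' C (x&y&s&H1&H2&H3&H4&H5). exists y, x, s. split; [auto|]. split; [auto|]. split; [apply sup_sym; auto|auto]. }
  destruct (qop_spec (qjoin_rel j m E) A B) as [(C&H1&H2)|(H1&H2)];
  unfold qjoin; rewrite H2.
  - symmetry. apply qop_some; [apply qj_fun|]. auto.
  - symmetry. apply qop_none. intros C HC. apply (H1 C); auto.
Qed.

Lemma side x y z s1 t : is_sup j m (Elt x) (Elt y) s1 -> is_sup j m s1 (Elt z) t ->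
  ((exists w, cls t w) -> obind (fun U => qjoin j m E U (E z)) (qjoin j m E (E x) (E y)) = Some (cls t)) /\
  (~ (exists w, cls t w) -> obind (fun U => qjoin j m E U (E z)) (qjoin j m E (E x) (E y)) = None).
Proof. intros H1 H2. destruct (classic (exists w, cls s1 w)) as [[u Hu]|N].
  - rewrite (proj1 (qj_char _ _ _ H1)) by eauto. simpl. rewrite (cls_E _ _ Hu).
    destruct (sup_ex L j m PL (Elt u) (Elt z)) as [t' Ht']; simpl; auto.
    assert (T : Th t' t).
    { eapply th_sup; [| |exact Ht'|exact H2]. apply th_sym; exact Hu.
      apply th_refl; simpl; auto. }
    rewrite <- (cls_eq _ _ T). apply qj_char; auto.
  - rewrite (proj2 (qj_char _ _ _ H1)) by auto. simpl. split; intro G; auto.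
    exfalso. destruct s1 as [|u|].
    + destruct H1 as (_&F&_). simpl in F; auto.
    + apply N. exists u. apply th_refl; simpl; auto.
    + destruct H2 as (_&F&_). destruct t; simpl in F; try tauto.
Qed.

Lemma qj_assoc X Y Z : qcar E X -> qcar E Y -> qcar E Z ->
  obind (fun U => qjoin j m E U Z) (qjoin j m E X Y) =
  obind (fun V => qjoin j m E X V) (qjoin j m E Y Z).
Proof. intros [x Hx] [y Hy] [z Hz]; subst.
  assert (F : (fun V => qjoin j m E (E x) V) = (fun V => qjoin j m E V (E x))).
  { apply functional_extensionality; intro; apply qj_comm. }
  rewrite F, (qj_comm (E y)).
  destruct (sup_ex L j m PL (Elt x) (Elt y)) as [s1 Hs1]; simpl; auto.
  destruct (sup_ex L j m PL s1 (Elt z)) as [t Ht]; simpl; auto. apply Hs1.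
  destruct (sup_ex L j m PL (Elt z) (Elt y)) as [s2 Hs2]; simpl; auto.
  destruct (sup_ex L j m PL s2 (Elt x)) as [t' Ht']; simpl; auto. apply Hs2.
  pose proof (sup_assoc L j m PL _ _ _ _ _ _ _ Hs1 Ht Hs2 Ht') as e. subst t'.
  destruct (side _ _ _ _ _ Hs1 Ht) as [a1 a2]. destruct (side _ _ _ _ _ Hs2 Ht') as [b1 b2].
  destruct (classic (exists w, cls t w)) as [G|G].
  - rewrite a1, b1; auto.
  - rewrite a2, b2; auto.
Qed.

Lemma qj_closed A B C : qcar E A -> qcar E B -> qjoin j m E A B = Some C -> qcar E C.
Proof. intros _ _ H. apply qop_some_inv in H. destruct H as (x&y&s&_&_&_&H4&w&Hw).
  subst. exists w. apply cls_E; auto. Qed.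

Lemma qj_idem A : qcar E A -> qjoin j m E A A = Some A.
Proof. intros [x Hx]; subst. rewrite <- (cls_E (Elt x) x) at 3 by (apply th_refl; simpl; auto).
  apply qj_char. apply (sup_elt L j m PL). apply (jidem L j m PL).
  exists x. apply th_refl; simpl; auto. Qed.

End C.

Lemma is_con_swap L (j m : L -> L -> option L) E :
  partial_lattice j m -> is_con j m E -> is_con m j E.
Proof. intros PL [Eq H]. split; auto. intros x y.
  rewrite <- H. exact (theta_fl L j m PL E (Elt x) (Elt y)). Qed.

Lemma qmeet_eq L (j m : L -> L -> option L) E :
  partial_lattice j m -> qmeet j m E = qjoin m j E.
Proof. intros PL. unfold qmeet, qjoin.
  assert (R : qmeet_rel j m E = qjoin_rel m j E).
  { apply functional_extensionality; intro A.
    apply functional_extensionality; intro B.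
    apply functional_extensionality; intro C.
    apply propositional_extensionality; split.
    - intros (x&y&s&H1&H2&H3&H4&H5). exists x, y, (fl L s).
      split; [auto|]. split; [auto|]. split.
      + apply (sup_inf_fl L j m PL). rewrite flK. exact H3.
      + split; auto. rewrite H4. apply functional_extensionality; intro z.
        apply propositional_extensionality.
        symmetry. exact (theta_fl L j m PL E s (Elt z)).
    - intros (x&y&s&H1&H2&H3&H4&H5). exists x, y, (fl L s).
      split; [auto|]. split; [auto|]. split.
      + exact (proj1 (sup_inf_fl L j m PL _ _ _) H3).
      + split; auto. rewrite H4. apply functional_extensionality; intro z.
        apply propositional_extensionality.
        rewrite <- (theta_fl L j m PL E (fl L s) (Elt z)). rewrite flK. tauto. }
  rewrite R. reflexivity.
Qed.

Lemma qdual L (j m : L -> L -> option L) E :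
  partial_lattice j m -> is_con j m E -> forall A B,
  qcar E A -> qcar E B -> qjoin j m E A B = Some A -> qmeet j m E A B = Some B.
Proof. intros PL Con A B [a Ha] [b Hb] H; subst.
  apply qop_some_inv in H. destruct H as (x&y&s&H1&H2&H3&H4&_).
  assert (Sa : Theta j m E s (Elt a)).
  { change ((fun z => Theta j m E s (Elt z)) a). rewrite <- H4. apply (E_refl L j m E Con). }
  destruct (sup_ex L j m PL (Elt a) (Elt b)) as [s' Hs']; simpl; auto.
  assert (T : Theta j m E s' s).
  { apply (th_sup L j m E (Elt a) (Elt x) (Elt b) (Elt y)); auto;
    apply (th_E L j m E Con); apply (E_eq L j m E Con); auto. }
  assert (Sa' : Theta j m E s' (Elt a)) by (eapply (th_trans L j m E); eauto).
  destruct (sup_ex L m j (PL_swap L j m PL) (Elt a) (Elt b)) as [s'' Hs'']; simpl; auto.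
  assert (Hi : is_inf j m (Elt a) (Elt b) (fl L s'')).
  { exact (proj1 (sup_inf_fl L j m PL _ _ _) Hs''). }
  assert (Hb' : is_inf j m s' (Elt b) (Elt b)).
  { destruct Hs' as (_&_&G&_). split; [simpl; auto|]. split; [exact G|].
    split; [apply (leS_refl L j m PL)|]. intros t _ _ G'; exact G'. }
  assert (Tb : Theta j m E (fl L s'') (Elt b)).
  { apply (th_inf L j m E _ _ _ _ _ _ (th_sym L j m E _ _ Sa')
      (th_refl L j m E (Elt b) I) Hi Hb'). }
  rewrite (qmeet_eq L j m E PL).
  apply qop_some.
  - apply (qj_fun L m j E (is_con_swap L j m E PL Con)).
  - exists a, b, s''. split; [auto|]. split; [auto|]. split; [exact Hs''|].
    split.
    + apply functional_extensionality; intro z. apply propositional_extensionality.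
      rewrite <- (flK L s'') at 1.
      change (Elt z) with (fl L (Elt z)).
      rewrite (theta_fl L j m PL E). split; intro G.
      * eapply (th_trans L j m E); [exact Tb|]. apply (th_E L j m E Con); auto.
      * apply (th_E L j m E Con). eapply (th_trans L j m E);
        [apply (th_sym L j m E); exact Tb|exact G].
    + exists b. apply (E_refl L j m E Con).
Qed.

Theorem mainTheorem7 (L : Type) (j m : L -> L -> option L) (E : L -> L -> Prop) :
  partial_lattice j m -> is_con j m E ->
  partial_lattice_on (qcar E) (qjoin j m E) (qmeet j m E).
Proof. intros PL Con.
  pose proof (PL_swap L j m PL) as PL'.
  pose proof (is_con_swap L j m E PL Con) as Con'.
  pose proof (qmeet_eq L j m E PL) as Q1.
  pose proof (qmeet_eq L m j E PL') as Q2.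
  split; [|split; [|split; [|split; [|split; [|split; [|split; [|split; [|split]]]]]]]].
  - apply (qj_closed L j m E Con).
  - rewrite Q1. apply (qj_closed L m j E Con').
  - apply (qj_idem L j m PL E Con).
  - rewrite Q1. apply (qj_idem L m j PL' E Con').
  - intros; apply (qj_comm L j m E Con).
  - rewrite Q1. intros; apply (qj_comm L m j E Con').
  - apply (qj_assoc L j m PL E Con).
  - rewrite Q1. apply (qj_assoc L m j PL' E Con').
  - apply (qdual L j m E PL Con).
  - rewrite Q1, <- Q2. apply (qdual L m j E PL' Con').
Qed.
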